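(* Under Total Store Order, in the limit $m\to\infty$, $\Pr[B_0]=2/3$, and for every integer $\gamma>0$, $$\Pr[B_\gamma]=\tfrac{6}{7}\cdot 4^{-\gamma}+R(\gamma)\cdot 2^{-\gamma}$$ for some number $R(\gamma)$ with $0\le R(\gamma)\le \tfrac{2}{21}$.
   Context: Fix $m\ge 1$. A random program is a sequence $x_1,\dots,x_{m+2}$ of memory operations, each with a type in $\{\mathrm{LD},\mathrm{ST}\}$: $x_1,\dots,x_m$ have i.i.d. types, each $\mathrm{ST}$ with probability $1/2$ and $\mathrm{LD}$ with probability $1/2$; $x_{m+1}$ (the critical load) has type $\mathrm{LD}$ and $x_{m+2}$ (the critical store) has type $\mathrm{ST}$. The initial order is $S_0=(x_1,\dots,x_{m+2})$. A memory model is specified by the set of ordered type pairs $(\tau_1,\tau_2)$ for which an instruction of type $\tau_2$ may be moved ahead of an immediately preceding instruction of type $\tau_1$: Sequential Consistency (SC) allows no pair; Total Store Order (TSO) allows only the pair $(\mathrm{ST},\mathrm{LD})$ (a load may move ahead of a preceding store); Weak Ordering (WO) allows all four pairs. The settling process runs rounds $r=1,\dots,m+2$. Before round $r$, the current order $S_{r-1}$ consists of $x_1,\dots,x_{r-1}$ in some order in positions $1,\dots,r-1$, followed by $x_r,\dots,x_{m+2}$ in positions $r,\dots,m+2$. In round $r$, instruction $x_r$ (starting at position $r$) repeatedly attempts to swap with the instruction immediately preceding it in the current order: the attempt fails automatically if the pair (type of the preceding instruction, type of $x_r$) is not allowed by the memory model, or if $x_r$ is the critical store and the preceding instruction is the critical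 load; otherwise the attempt succeeds independently with probability $1/2$. The round ends when an attempt fails or $x_r$ reaches position $1$; the resulting order is $S_r$. The final order is $S_{m+2}$. For $\gamma\ge 0$, $B_\gamma$ is the event that in $S_{m+2}$ exactly $\gamma$ instructions lie strictly between the critical load and the critical store. *)

(* Defs.v *)
From Stdlib Require Import Reals List Arith Bool.
Import ListNotations.
Open Scope R_scope.

Inductive ty : Type := LD | ST.

Definition ty_eqb (a b : ty) : bool :=
  match a, b with LD, LD | ST, ST => true | _, _ => false end.

(** An instruction x_i is represented by its index i (1-based) and its type. *)
Definition instr : Type := (nat * ty)%type.

(** A memory model: the set of ordered type pairs (tau1, tau2) such that an
    instruction of type tau2 may move ahead of an immediately preceding
    instruction of type tau1. *)
Definition model : Type := ty -> ty -> bool.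

Definition SC : model := fun _ _ => false.
Definition TSO : model := fun t1 t2 => ty_eqb t1 ST && ty_eqb t2 LD.
Definition WO : model := fun _ _ => true.

Definition dist (T : Type) : Type := list (R * T).

Definition dret {T} (x : T) : dist T := [(1, x)].
Definition dscale {T} (c : R) (d : dist T) : dist T :=
  map (fun p => (c * fst p, snd p)) d.
Definition dbind {T U} (d : dist T) (f : T -> dist U) : dist U :=
  flat_map (fun p => dscale (fst p) (f (snd p))) d.
Definition dprob {T} (d : dist T) (P : T -> bool) : R :=
  fold_right (fun p acc => (if P (snd p) then fst p else 0) + acc) 0 d.

Section Process.
Variable M : model.
Variable m : nat.

Definition crit_load : nat := S m.
Definition crit_store : nat := S (S m).

Definition blocked (p x : instr) : bool :=
  negb (M (snd p) (snd x)) ||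
  (Nat.eqb (fst x) crit_store && Nat.eqb (fst p) crit_load).

(** One round: [x] starts just after the current prefix.  [rpre] is the part
    of the order preceding x, reversed (head = immediate predecessor);
    [acc] are the instructions x has already passed (in order).  Returns the
    distribution of the resulting order of positions 1..r. *)
Fixpoint move (x : instr) (rpre acc : list instr) : dist (list instr) :=
  match rpre with
  | [] => dret (x :: acc)
  | p :: rest =>
      if blocked p x then dret (rev rpre ++ x :: acc)
      else dscale (/2) (dret (rev rpre ++ x :: acc))
           ++ dscale (/2) (move x rest (p :: acc))
  end.

(** Settling: rounds r = 1, ..., m+2, processing x_r in program order.
    [pre] is the current order of x_1..x_(r-1) (positions 1..r-1). *)
Fixpoint settle_from (pre : list instr) (prog : list instr)
  : dist (list instr) :=
  match prog with
  | [] => dret pre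
  | x :: rest => dbind (move x (rev pre) []) (fun pre' => settle_from pre' rest)
  end.

Definition settle (prog : list instr) : dist (list instr) := settle_from [] prog.

Fixpoint rand_types (i k : nat) : dist (list instr) :=
  match k with
  | O => dret []
  | S k' =>
      dbind (rand_types (S i) k') (fun rest =>
        dscale (/2) (dret ((i, ST) :: rest)) ++ dscale (/2) (dret ((i, LD) :: rest)))
  end.

Definition program : dist (list instr) :=
  dbind (rand_types 1 m) (fun l => dret (l ++ [(crit_load, LD); (crit_store, ST)])).

Fixpoint pos_of (k : nat) (l : list instr) : nat :=
  match l with
  | [] => O
  | x :: t => if Nat.eqb (fst x) k then O else S (pos_of k t)
  end.

(** Event B_gamma: exactly gamma instructions strictly between the critical
    load and the critical store in the final order. *)
Definition B (gamma : nat) (l : list instr) : bool :=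
  let i := pos_of crit_load l in
  let j := pos_of crit_store l in
  Nat.eqb (Nat.max i j - Nat.min i j) (S gamma).

Definition PrB (gamma : nat) : R := dprob (dbind program settle) (B gamma).

End Process.

(* Main.v *)
Require Import Defs.
From Stdlib Require Import Reals List Arith Lia Lra Psatz.
Import ListNotations.
Open Scope R_scope.

Fixpoint E {T} (d : Defs.dist T) (g : T -> R) : R :=
  match d with [] => 0 | p :: r => fst p * g (snd p) + E r g end.

Lemma dprob_E {T} (d : Defs.dist T) P : dprob d P = E d (fun x => if P x then 1 else 0).
Proof. induction d as [|[a x] d IH]; simpl; [reflexivity|]. rewrite IH. destruct (P x); ring. Qed.

Lemma E_app {T} (d1 d2 : Defs.dist T) g : E (d1 ++ d2) g = E d1 g + E d2 g.
Proof. induction d1 as [|p d IH]; simpl; [ring|]. rewrite IH; ring. Qed.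

Lemma E_scale {T} c (d : Defs.dist T) g : E (dscale c d) g = c * E d g.
Proof. induction d as [|p d IH]; simpl; [ring|]. rewrite IH; ring. Qed.

Lemma E_ret {T} (x : T) g : E (dret x) g = g x.
Proof. simpl; ring. Qed.

Lemma E_bind {T U} (d : Defs.dist T) (f : T -> Defs.dist U) g :
  E (dbind d f) g = E d (fun x => E (f x) g).
Proof.
  induction d as [|p d IH]; simpl; [reflexivity|].
  unfold dbind in *. simpl. rewrite E_app, E_scale, IH. reflexivity.
Qed.

Lemma E_ext_supp {T} (d : Defs.dist T) g g' :
  (forall p, In p d -> g (snd p) = g' (snd p)) -> E d g = E d g'.
Proof.
  induction d as [|p d IH]; intros H; simpl; [reflexivity|].
  rewrite H by (left; reflexivity). rewrite IH; [reflexivity|].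
  intros q Hq; apply H; right; exact Hq.
Qed.

Lemma E_ext {T} (d : Defs.dist T) g g' : (forall x, g x = g' x) -> E d g = E d g'.
Proof. intros H; apply E_ext_supp; intros; apply H. Qed.

Lemma E_lin {T} (d : Defs.dist T) a b f h :
  E d (fun x => a * f x + b * h x) = a * E d f + b * E d h.
Proof. induction d as [|p d IH]; simpl; [ring|]. rewrite IH; ring. Qed.

Lemma In_bind {T U} (d : Defs.dist T) (f : T -> Defs.dist U) p :
  In p (dbind d f) -> exists q, In q d /\ exists r, In r (f (snd q)) /\ snd p = snd r.
Proof.
  unfold dbind. intros H. apply in_flat_map in H. destruct H as [q [Hq Hp]].
  exists q; split; auto. unfold dscale in Hp. apply in_map_iff in Hp.
  destruct Hp as [r [Hr1 Hr2]]. exists r; split; auto. rewrite <- Hr1; reflexivity.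
Qed.

Lemma In_scale {T} c (d : Defs.dist T) p : In p (dscale c d) -> exists r, In r d /\ snd p = snd r.
Proof. unfold dscale; intros H; apply in_map_iff in H. destruct H as [r [H1 H2]].
  exists r; split; auto; rewrite <- H1; reflexivity. Qed.

Definition blocked' (p x : instr) : bool := negb (TSO (snd p) (snd x)).

Fixpoint move' (x : instr) (rpre acc : list instr) : Defs.dist (list instr) :=
  match rpre with
  | [] => dret (x :: acc)
  | p :: rest =>
      if blocked' p x then dret (rev rpre ++ x :: acc)
      else dscale (/2) (dret (rev rpre ++ x :: acc))
           ++ dscale (/2) (move' x rest (p :: acc))
  end.

Fixpoint settle' (pre : list instr) (prog : list instr) : Defs.dist (list instr) :=
  match prog with
  | [] => dret pre
  | x :: rest => dbind (move' x (rev pre) []) (fun pre' => settle' pre' rest)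
  end.

Lemma move_eq m x : (snd x = ST \/ fst x <> S (S m)) ->
  forall rpre acc, move TSO m x rpre acc = move' x rpre acc.
Proof.
  intros Hx rpre; induction rpre as [|p rest IH]; intros acc; simpl; [reflexivity|].
  assert (Hb : blocked TSO m p x = blocked' p x).
  { unfold blocked, blocked', crit_store. destruct Hx as [Hx|Hx].
    - rewrite Hx. destruct (snd p); reflexivity.
    - destruct (negb (TSO (snd p) (snd x))); simpl; [reflexivity|].
      destruct (Nat.eqb_spec (fst x) (S (S m))); [contradiction|reflexivity]. }
  rewrite Hb, IH. reflexivity.
Qed.

Lemma dbind_ext {T U} (d : Defs.dist T) (f g : T -> Defs.dist U) :
  (forall x, f x = g x) -> dbind d f = dbind d g.
Proof. intros H; induction d as [|p d IH]; simpl; [reflexivity|].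
  unfold dbind in *; simpl; rewrite H, IH; reflexivity. Qed.

Lemma settle_eq m prog : Forall (fun x => snd x = ST \/ fst x <> S (S m)) prog ->
  forall pre, settle_from TSO m pre prog = settle' pre prog.
Proof.
  induction prog as [|x rest IH]; intros HF pre; simpl; [reflexivity|].
  inversion HF; subst. rewrite move_eq by assumption.
  apply dbind_ext; intros; apply IH; assumption.
Qed.

Lemma E_settle'_app pre l1 l2 g :
  E (settle' pre (l1 ++ l2)) g = E (settle' pre l1) (fun p => E (settle' p l2) g).
Proof.
  revert pre; induction l1 as [|x l1 IH]; intros pre; simpl.
  - ring.
  - rewrite !E_bind. apply E_ext; intros; apply IH.
Qed.

Lemma in_revapp (y x : instr) l acc : In y (rev l ++ x :: acc) -> y = x \/ In y l \/ In y acc.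
Proof. intros H. apply in_app_or in H. destruct H as [H|H].
  - rewrite <- in_rev in H; auto.
  - destruct H as [H|H]; auto. Qed.

Lemma supp_move' x rpre acc p : In p (move' x rpre acc) ->
  forall y, In y (snd p) -> y = x \/ In y rpre \/ In y acc.
Proof.
  revert acc p; induction rpre as [|q rest IH]; intros acc p Hp y Hy; cbn [move'] in Hp.
  - destruct Hp as [Hp|[]]; subst; simpl in Hy. destruct Hy; auto.
  - destruct (blocked' q x).
    + destruct Hp as [Hp|[]]; subst; simpl snd in Hy. change (In y (rev (q :: rest) ++ x :: acc)) in Hy. apply in_revapp in Hy. exact Hy.
    + apply in_app_or in Hp; destruct Hp as [Hp|Hp].
      * destruct Hp as [Hp|[]]; subst; simpl snd in Hy. change (In y (rev (q :: rest) ++ x :: acc)) in Hy. apply in_revapp in Hy. exact Hy.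
      * apply In_scale in Hp. destruct Hp as [r [Hr Hr2]]. rewrite Hr2 in Hy.
        destruct (IH _ _ Hr y Hy) as [H|[H|[H|H]]]; subst; simpl; auto.
Qed.

Lemma supp_settle' prog pre p : In p (settle' pre prog) ->
  forall y, In y (snd p) -> In y pre \/ In y prog.
Proof.
  revert pre p; induction prog as [|x rest IH]; intros pre p Hp y Hy; simpl in *.
  - destruct Hp as [Hp|[]]; subst; auto.
  - apply In_bind in Hp. destruct Hp as [q [Hq [r [Hr Hpr]]]].
    rewrite Hpr in Hy. destruct (IH _ _ Hr y Hy) as [H|H]; [|auto].
    destruct (supp_move' _ _ _ _ Hq y H) as [H1|[H1|H1]]; auto.
    rewrite <- in_rev in H1; auto. destruct H1.
Qed.

Lemma supp_rand k i p : In p (rand_types i k) ->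
  forall y, In y (snd p) -> (i <= fst y < i + k)%nat.
Proof.
  revert i p; induction k as [|k IH]; intros i p Hp y Hy; simpl in *.
  - destruct Hp as [Hp|[]]; subst; simpl in Hy; destruct Hy.
  - apply In_bind in Hp. destruct Hp as [q [Hq [r [Hr Hpr]]]].
    rewrite Hpr in Hy. simpl in Hr.
    destruct Hr as [Hr|[Hr|[]]]; subst; simpl in Hy;
    (destruct Hy as [Hy|Hy]; [subst; simpl; lia|]);
    specialize (IH _ _ Hq y Hy); lia.
Qed.

Lemma rt_succ i k f : E (rand_types i (S k)) f =
  E (rand_types (S i) k) (fun rest => /2 * f ((i,ST)::rest) + /2 * f ((i,LD)::rest)).
Proof. simpl rand_types. rewrite E_bind. apply E_ext; intros; simpl; ring. Qed.

Lemma rt_snoc k : forall i f, E (rand_types i (S k)) f =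
  E (rand_types i k) (fun l => /2 * f (l ++ [((i + k)%nat, ST)]) + /2 * f (l ++ [((i+k)%nat, LD)])).
Proof.
  induction k as [|k IH]; intros i f.
  - rewrite rt_succ. simpl. rewrite Nat.add_0_r. reflexivity.
  - rewrite rt_succ, IH, rt_succ. apply E_ext; intros l.
    replace (S i + k)%nat with (i + S k)%nat by lia. simpl.
    assert (H : forall a b c d : R, /2*(/2*a + /2*b) + /2*(/2*c+/2*d) = /2*(/2*a+/2*c) + /2*(/2*b+/2*d)) by (intros; ring).
    apply H.
Qed.

Definition Q (m : nat) (g : list instr -> R) : R :=
  E (rand_types 1 m) (fun l => E (settle' [] l) g).

Lemma Q_ext m g g' : (forall x, g x = g' x) -> Q m g = Q m g'.
Proof. intros H; unfold Q; apply E_ext; intros; apply E_ext; auto. Qed.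

Lemma Q_lin m a b f h : Q m (fun x => a * f x + b * h x) = a * Q m f + b * Q m h.
Proof. unfold Q. rewrite <- E_lin. apply E_ext; intros; apply E_lin. Qed.

Lemma Q_step m g : Q (S m) g = Q m (fun pre =>
  /2 * E (move' (S m, ST) (rev pre) []) g + /2 * E (move' (S m, LD) (rev pre) []) g).
Proof.
  unfold Q. rewrite rt_snoc. simpl (1 + m)%nat.
  apply E_ext; intros l. rewrite !E_settle'_app. rewrite E_lin.
  f_equal; f_equal; apply E_ext; intros pre; simpl; rewrite !E_bind; apply E_ext; intros; simpl; ring.
Qed.

Fixpoint lead (l : list instr) : nat :=
  match l with [] => O | p :: r => match snd p with ST => S (lead r) | LD => O end end.

Definition Lp (pre : list instr) : nat := lead (rev pre).

Fixpoint W (G : nat -> R) (a n : nat) : R :=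
  match n with O => G a | S n' => /2 * G a + /2 * W G (S a) n' end.

Lemma W_shift G a n : W G (S a) n = W (fun k => G (S k)) a n.
Proof. revert a; induction n; intros a; simpl; [reflexivity|]. rewrite IHn; reflexivity. Qed.

Lemma W_ext G G' a n : (forall k, (a <= k <= a + n)%nat -> G k = G' k) -> W G a n = W G' a n.
Proof.
  revert a; induction n; intros a H; simpl.
  - apply H; lia.
  - rewrite H by lia. rewrite (IHn (S a)); [reflexivity|]. intros; apply H; lia.
Qed.

Lemma W_lin G1 G2 a n : W (fun k => G1 k - G2 k) a n = W G1 a n - W G2 a n.
Proof. revert a; induction n; intros a; simpl; [reflexivity|]. rewrite IHn; ring. Qed.

Lemma move_ST x rpre acc : snd x = ST -> move' x rpre acc = dret (rev rpre ++ x :: acc).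
Proof.
  intros Hx; destruct rpre as [|p rest]; simpl; [reflexivity|].
  unfold blocked'. rewrite Hx. destruct (snd p); reflexivity.
Qed.

Lemma move_LD x rpre acc g : snd x = LD ->
  E (move' x rpre acc) g =
  W (fun k => g (rev (skipn k rpre) ++ x :: rev (firstn k rpre) ++ acc)) 0 (lead rpre).
Proof.
  intros Hx. revert acc; induction rpre as [|p rest IH]; intros acc.
  - simpl. rewrite Rmult_1_l, Rplus_0_r; reflexivity.
  - cbn [move' lead]. unfold blocked'. rewrite Hx.
    destruct (snd p) eqn:Hp; simpl negb; cbv iota.
    + simpl. rewrite Rmult_1_l, Rplus_0_r; reflexivity.
    + rewrite E_app, !E_scale, IH. cbn [W]. rewrite W_shift.
      f_equal.
      * f_equal. simpl. rewrite Rmult_1_l, Rplus_0_r; reflexivity.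
      * f_equal. apply W_ext; intros k _. cbn [skipn firstn rev].
        rewrite <- !app_assoc. reflexivity.
Qed.

Definition indR (j k : nat) : R := if Nat.leb j k then 1 else 0.

Lemma W_ind_gen j n : forall a, W (indR j) a n =
  if Nat.leb j a then 1 else if Nat.leb j (a + n) then (/2)^(j - a) else 0.
Proof.
  induction n as [|n IH]; intros a; cbn [W].
  - unfold indR. rewrite Nat.add_0_r. destruct (Nat.leb j a); reflexivity.
  - rewrite IH. unfold indR.
    destruct (Nat.leb_spec j a); [ | destruct (Nat.leb_spec j (S a))].
    + rewrite (proj2 (Nat.leb_le j (S a)) ltac:(lia)); lra.
    + assert (j = S a) by lia. subst.
      assert (Nat.leb (S a) (a + S n) = true) by (apply Nat.leb_le; lia). rewrite H1.
      replace (S a - a)%nat with 1%nat by lia. simpl. lra.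
    + replace (S a + n)%nat with (a + S n)%nat by lia.
      destruct (Nat.leb (j) (a + S n)); [|lra].
      replace (j - a)%nat with (S (j - S a)) by lia. simpl. lra.
Qed.

Lemma W_ind j n : W (indR j) 0 n = (/2)^j * indR j n.
Proof.
  rewrite W_ind_gen. unfold indR. destruct j as [|j]; simpl.
  - lra.
  - destruct n; [lra|]. destruct (Nat.leb j n); lra.
Qed.

Lemma W_const n : forall a, W (fun _ => 1) a n = 1.
Proof. induction n; intros a; simpl; [reflexivity|]. rewrite IHn; lra. Qed.

Lemma lead_allST l x r : Forall (fun y => snd y = ST) l -> snd x = LD ->
  lead (l ++ x :: r) = length l.
Proof.
  intros HF Hx; induction HF as [|y l Hy HF IH]; simpl.
  - rewrite Hx; reflexivity.
  - rewrite Hy, IH; reflexivity.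
Qed.

Lemma firstn_lead k rp : (k <= lead rp)%nat ->
  Forall (fun y => snd y = ST) (firstn k rp) /\ length (firstn k rp) = k.
Proof.
  revert rp; induction k as [|k IH]; intros rp Hk; simpl.
  - split; auto.
  - destruct rp as [|p rp]; simpl in Hk; [lia|].
    destruct (snd p) eqn:Hp; [lia|].
    destruct (IH rp ltac:(lia)) as [H1 H2]. simpl. split; auto.
Qed.

Lemma E_move_ST_Lp i pre G :
  E (move' (i,ST) (rev pre) []) (fun p => G (Lp p)) = G (S (Lp pre)).
Proof.
  rewrite move_ST by reflexivity. simpl. rewrite Rmult_1_l, Rplus_0_r.
  unfold Lp. rewrite rev_involutive, rev_app_distr. reflexivity.
Qed.

Lemma E_move_LD_Lp i pre G :
  E (move' (i,LD) (rev pre) []) (fun p => G (Lp p)) = W G 0 (Lp pre).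
Proof.
  rewrite move_LD by reflexivity. unfold Lp at 2. apply W_ext. intros k Hk.
  simpl in Hk. destruct (firstn_lead k (rev pre) ltac:(lia)) as [H1 H2].
  unfold Lp. rewrite app_nil_r, rev_app_distr. simpl. rewrite rev_involutive.
  rewrite <- app_assoc. simpl. rewrite lead_allST; auto.
Qed.

Definition T m j := Q m (fun pre => indR j (Lp pre)).

Lemma Q_one m : Q m (fun _ => 1) = 1.
Proof.
  induction m as [|m IH].
  - unfold Q; simpl; lra.
  - rewrite Q_step. transitivity (Q m (fun _ => 1)); [|exact IH]. apply Q_ext; intros pre.
    pose proof (E_move_ST_Lp (S m) pre (fun _ => 1)) as Ha. cbv beta in Ha.
    pose proof (E_move_LD_Lp (S m) pre (fun _ => 1)) as Hb. cbv beta in Hb.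
    rewrite Ha, Hb, W_const. lra.
Qed.

Lemma T_0 m : T m 0 = 1.
Proof. unfold T. rewrite <- (Q_one m). apply Q_ext; intros; reflexivity. Qed.

Lemma T_init j : T 0 (S j) = 0.
Proof. unfold T, Q; simpl. unfold Lp, indR; simpl. lra. Qed.

Lemma T_rec m j : T (S m) (S j) = /2 * T m j + (/2)^(S (S j)) * T m (S j).
Proof.
  unfold T. rewrite Q_step, <- Q_lin. apply Q_ext; intros pre.
  rewrite (E_move_ST_Lp _ _ (indR (S j))), (E_move_LD_Lp _ _ (indR (S j))), W_ind.
  unfold indR at 1 3. simpl Nat.leb. simpl pow. lra.
Qed.

Lemma pos_of_app k A r : (forall y, In y A -> fst y <> k) ->
  pos_of k (A ++ r) = (length A + pos_of k r)%nat.
Proof.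
  induction A as [|a A IH]; intros H; simpl; [reflexivity|].
  destruct (Nat.eqb_spec (fst a) k) as [He|He].
  - exfalso; apply (H a); [left; reflexivity | exact He].
  - rewrite IH; [reflexivity|]. intros y Hy; apply H; right; exact Hy.
Qed.

Lemma In_skipn' {A} k (l : list A) y : In y (skipn k l) -> In y l.
Proof. intros H. rewrite <- (firstn_skipn k l). apply in_or_app; auto. Qed.
Lemma In_firstn' {A} k (l : list A) y : In y (firstn k l) -> In y l.
Proof. intros H. rewrite <- (firstn_skipn k l). apply in_or_app; auto. Qed.

Lemma B_val m g (A Sl : list instr) :
  (forall y, In y A -> (fst y < S m)%nat) -> (forall y, In y Sl -> (fst y < S m)%nat) ->
  (if B m g (A ++ ((S m, LD) :: Sl) ++ [(S (S m), ST)]) then 1 else 0) =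
  indR g (length Sl) - indR (S g) (length Sl).
Proof.
  intros HA HS. unfold B, crit_load, crit_store.
  rewrite (pos_of_app (S m) A), (pos_of_app (S (S m)) A).
  2: { intros y Hy Heq. specialize (HA y Hy). lia. }
  2: { intros y Hy Heq. specialize (HA y Hy). lia. }
  cbn [pos_of fst app]. rewrite Nat.eqb_refl.
  assert (Hne : Nat.eqb (S m) (S (S m)) = false) by (apply Nat.eqb_neq; lia). rewrite Hne.
  rewrite pos_of_app.
  2: { intros y Hy Heq. specialize (HS y Hy). lia. }
  cbn [pos_of fst]. rewrite Nat.eqb_refl.
  assert (Hx: forall a b, (Nat.max (a+0) (a + S (b+0)) - Nat.min (a+0) (a + S (b+0)))%nat = S b) by (intros; lia).
  rewrite Hx.
  assert (Hy : forall k, (if S k =? S g then 1 else 0) = indR g k - indR (S g) k).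
  2: apply Hy.
  intros k. unfold indR. destruct (Nat.eqb_spec (S k) (S g)); destruct (Nat.leb_spec g k);
    destruct (Nat.leb_spec (S g) k); try lia; lra.
Qed.

Lemma h_val m g pre : (forall y, In y pre -> (fst y < S m)%nat) ->
  E (settle' pre [(S m, LD); (S (S m), ST)]) (fun x => if B m g x then 1 else 0) =
  (/2)^g * indR g (Lp pre) - (/2)^(S g) * indR (S g) (Lp pre).
Proof.
  intros Hpre. simpl settle'. rewrite E_bind, move_LD by reflexivity.
  rewrite <- !W_ind, <- W_lin. unfold Lp. apply W_ext. intros k Hk. simpl in Hk.
  assert (Hk' : (k <= lead (rev pre))%nat) by apply Hk.
  destruct (firstn_lead k (rev pre) Hk') as [H1 H2].
  rewrite E_bind, move_ST by reflexivity. simpl E. rewrite Rmult_1_l, Rplus_0_r, Rmult_1_l, Rplus_0_r.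
  rewrite rev_involutive, app_nil_r.
  rewrite <- app_assoc.
  etransitivity; [apply (B_val m g (rev (skipn k (rev pre))) (rev (firstn k (rev pre))))|].
  3: { cbv [instr] in *. rewrite length_rev, H2. reflexivity. }
  - intros y Hy. apply Hpre. rewrite <- in_rev in Hy.
    apply in_rev. eapply In_skipn'; eauto.
  - intros y Hy. apply Hpre. rewrite <- in_rev in Hy.
    apply in_rev. eapply In_firstn'; eauto.
Qed.

Lemma PrB_T m g : PrB TSO m g = (/2)^g * T m g - (/2)^(S g) * T m (S g).
Proof.
  transitivity (Q m (fun pre => (/2)^g * indR g (Lp pre) + (- (/2)^(S g)) * indR (S g) (Lp pre))).
  2: { rewrite Q_lin. unfold T. ring. }
  unfold PrB, program, settle. rewrite dprob_E, !E_bind. unfold Q.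
  apply E_ext_supp. intros p Hp. rewrite E_ret.
  pose proof (supp_rand _ _ _ Hp) as Hs.
  unfold crit_load, crit_store.
  rewrite settle_eq.
  2: { apply Forall_forall; intros y Hy. apply in_app_or in Hy. destruct Hy as [Hy|Hy].
       - right. specialize (Hs y Hy). lia.
       - destruct Hy as [<-|[<-|[]]]; simpl; auto. }
  rewrite E_settle'_app. apply E_ext_supp; intros q Hq.
  rewrite h_val; [ring|].
  intros y Hy. destruct (supp_settle' _ _ _ Hq y Hy) as [H|H]; [destruct H|].
  specialize (Hs y H). lia.
Qed.

Lemma lin_cv (x b : nat -> R) a B : 0 <= a < 1 ->
  (forall n, x (S n) = a * x n + b n) -> Un_cv b B -> Un_cv x (B / (1 - a)).
Proof.
  intros Ha Hx Hb eps Heps.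
  set (L := B / (1 - a)).
  assert (HL : L = a * L + B) by (unfold L; field; lra).
  assert (He2 : eps * (1 - a) / 2 > 0) by (apply Rmult_gt_0_compat; [apply Rmult_gt_0_compat|]; lra).
  destruct (Hb _ He2) as [N HN].
  assert (Hk : forall k, Rabs (x (N + k)%nat - L) <= a ^ k * Rabs (x N - L) + eps / 2).
  { induction k as [|k IH].
    - rewrite Nat.add_0_r. simpl. pose proof (Rabs_pos (x N - L)). lra.
    - rewrite Nat.add_succ_r, Hx.
      replace (a * x (N + k)%nat + b (N + k)%nat - L) with (a * (x (N + k)%nat - L) + (b (N+k)%nat - B)) by lra.
      eapply Rle_trans; [apply Rabs_triang|]. rewrite Rabs_mult, (Rabs_pos_eq a) by lra.
      specialize (HN (N + k)%nat ltac:(lia)). unfold R_dist in HN.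
      simpl pow.
      assert (a * Rabs (x (N + k)%nat - L) <= a * (a ^ k * Rabs (x N - L) + eps / 2))
        by (apply Rmult_le_compat_l; lra).
      nra. }
  set (R0 := Rabs (x N - L)).
  assert (HR0 : 0 <= R0) by apply Rabs_pos.
  assert (Hy : eps / 2 / (R0 + 1) > 0) by (apply Rdiv_lt_0_compat; lra).
  destruct (pow_lt_1_zero a ltac:(rewrite Rabs_pos_eq; lra) _ Hy) as [K HK].
  exists (N + K)%nat. intros n Hn. unfold R_dist.
  replace n with (N + (n - N))%nat by lia.
  specialize (HK (n - N)%nat ltac:(lia)).
  specialize (Hk (n - N)%nat). fold R0 in Hk.
  rewrite Rabs_pos_eq in HK by (apply pow_le; lra).
  assert (a ^ (n - N) * (R0 + 1) < eps / 2).
  { apply (Rmult_lt_compat_r (R0 + 1)) in HK; [|lra].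
    unfold Rdiv in HK. rewrite Rmult_assoc, Rinv_l in HK by lra. lra. }
  assert (0 <= a ^ (n - N)) by (apply pow_le; lra).
  nra.
Qed.

Fixpoint tlim (j : nat) : R :=
  match j with O => 1 | S j' => /2 * tlim j' / (1 - (/2)^(S (S j'))) end.

Lemma Un_cv_ext u v l : (forall n, u n = v n) -> Un_cv u l -> Un_cv v l.
Proof. intros H Hu eps He. destruct (Hu eps He) as [N HN]. exists N; intros n Hn.
  rewrite <- H; auto. Qed.

Lemma cv_const c : Un_cv (fun _ => c) c.
Proof. intros eps He; exists O; intros; unfold R_dist; rewrite Rminus_diag, Rabs_R0; lra. Qed.

Lemma pow_half_bounds j : 0 < (/2)^(S j) <= /2.
Proof.
  induction j as [|j IH]; [simpl; lra|].
  change ((/2)^(S (S j))) with (/2 * (/2)^(S j)).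
  destruct IH as [I1 I2]. set (y := (/2)^(S j)) in *. split; lra.
Qed.

Lemma cvT j : Un_cv (fun m => T m j) (tlim j).
Proof.
  induction j as [|j IH].
  - apply (Un_cv_ext (fun _ => 1)); [intros; rewrite T_0; reflexivity|]. apply cv_const.
  - simpl tlim. apply lin_cv with (b := fun m => /2 * T m j).
    + pose proof (pow_half_bounds (S j)) as Hp. simpl in Hp. lra.
    + intros n. rewrite T_rec. simpl pow. ring.
    + apply (Un_cv_ext (fun m => (fun _ => /2) m * T m j)); [reflexivity|].
      apply CV_mult; [apply cv_const|exact IH].
Qed.

Lemma cvPrB g : Un_cv (fun m => PrB TSO m g) ((/2)^g * tlim g - (/2)^(S g) * tlim (S g)).
Proof.
  apply (Un_cv_ext (fun m => (fun _ => (/2)^g) m * T m g - (fun _ => (/2)^(S g)) m * T m (S g))).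
  - intros; rewrite PrB_T; reflexivity.
  - apply CV_minus; apply CV_mult; try apply cv_const; apply cvT.
Qed.

Lemma tl_bounds g : (1 <= g)%nat ->
  4/3 * (/2)^g <= tlim g <= (2 - 4/3 * (/2)^g) * (/2)^g.
Proof.
  induction g as [|g IH]; intros Hg; [lia|].
  destruct g as [|g].
  - simpl. split; field_simplify; lra.
  - specialize (IH ltac:(lia)).
    assert (Ht : tlim (S (S g)) = /2 * tlim (S g) / (1 - (/2)^(S (S (S g))))) by reflexivity.
    rewrite Ht.
    set (x := (/2)^(S g)) in *.
    assert (Hx : 0 < x <= /2) by apply pow_half_bounds.
    replace ((/2)^(S (S (S g)))) with (x / 4) by (unfold x; simpl; field).
    replace ((/2)^(S (S g))) with (x / 2) by (unfold x; simpl; field).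
    set (t := tlim (S g)) in *.
    assert (Hd : 0 < 1 - x/4) by lra.
    assert (E1 : /2 * t / (1 - x/4) * (1 - x/4) = /2 * t) by (field; lra).
    split.
    + apply Rmult_le_reg_r with (1 - x/4); [lra|]. rewrite E1. nra.
    + apply Rmult_le_reg_r with (1 - x/4); [lra|]. rewrite E1. nra.
Qed.

Lemma pow4 g : (/4)^g = (/2)^g * (/2)^g.
Proof. rewrite <- Rpow_mult_distr. f_equal. field. Qed.

Lemma cubic_ok x : 0 < x <= /4 -> 21 * ((2 - 4/3*x) * x * (3 - x)) - 18 * (x * (4 - x)) <= 2 * (4 - x).
Proof. intros H. assert (0 <= x*x*(/4-x)) by (apply Rmult_le_pos; nra). nra. Qed.

Theorem theorem1 :
  Un_cv (fun m : nat => PrB TSO m 0) (2 / 3) /\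
  (forall gamma : nat, (0 < gamma)%nat ->
     exists Rg : R, 0 <= Rg <= 2 / 21 /\
       Un_cv (fun m : nat => PrB TSO m gamma)
             (6 / 7 * (/ 4) ^ gamma + Rg * (/ 2) ^ gamma)).
Proof.
  split.
  - replace (2/3) with ((/2)^0 * tlim 0 - (/2)^1 * tlim 1) by (simpl; field).
    apply cvPrB.
  - intros g Hg.
    pose proof (cvPrB g) as Hcv.
    assert (Ht1 : tlim (S g) = /2 * tlim g / (1 - (/2)^(S (S g)))) by reflexivity.
    set (x := (/2)^g) in *. set (t := tlim g) in *.
    assert (Hx4 : (/2)^(S (S g)) = x / 4) by (unfold x; simpl; field).
    assert (Hx : 0 < x <= /2) by (unfold x; destruct g; [lia|]; apply pow_half_bounds).
    pose proof (tl_bounds g ltac:(lia)) as Htb. fold x t in Htb.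
    exists (t * (3 - x) / (4 - x) - 6/7 * x).
    set (r := t * (3 - x) / (4 - x) - 6/7 * x).
    assert (Hr : r * (4 - x) = t * (3 - x) - 6/7 * x * (4 - x)) by (unfold r; field; lra).
    split.
    + split.
      * assert (t * (3 - x) >= 4/3 * x * (3 - x)) by nra.
        assert (0 <= r * (4 - x)) by nra. nra.
      * assert (t * (3 - x) <= (2 - 4/3 * x) * x * (3 - x)) by nra.
        destruct g as [|[|g']]; [lia| |].
        -- assert (x = /2) by (unfold x; simpl; field).
           assert (t = 2/3) by (unfold t; simpl; field).
           assert (r = 1/21) by (unfold r; rewrite H0, H1; field). lra.
        -- assert (x <= /4) by (unfold x; pose proof (pow_half_bounds g'); simpl in *; lra).
           pose proof (cubic_ok x ltac:(lra)).
           assert (r * (4 - x) <= 2/21 * (4 - x)) by nra. nra.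
    + replace (6 / 7 * (/ 4) ^ g + r * x) with (x * t - (/2)^(S g) * tlim (S g)).
      * exact Hcv.
      * rewrite pow4. fold x. rewrite Ht1, Hx4.
        replace ((/2)^(S g)) with (x / 2) by (unfold x; simpl; field).
        unfold r. field. lra.
Qed.
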